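(* For every integer $n\ge3$, $$\int_{1+\frac1n}^{1+\frac{(\log n)^2}{n}}F_n(w)\,dw\le 2n\log\log n.$$
   Context: For $w>0$ and integer $n\ge1$ let $a_n(w)=\sum_{j=0}^n w^j$, $b_n(w)=\sum_{j=1}^n jw^j$, $c_n(w)=\sum_{j=0}^n j^2w^j$, and $$F_n(w)=\frac{1}{2\sqrt{w}}\sqrt{\frac{c_n(w)}{a_n(w)}}\sqrt{\frac{a_n(w)c_n(w)-b_n(w)^2}{w\,a_n(w)^2}}.$$ $\log$ is the natural logarithm. *)

(* Defs.v *)
From Stdlib Require Import Reals.
From Coquelicot Require Import Coquelicot.
Open Scope R_scope.

Definition a_n (n : nat) (w : R) : R := sum_f_R0 (fun j => w ^ j) n.
Definition b_n (n : nat) (w : R) : R := sum_f_R0 (fun j => INR j * w ^ j) n.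
Definition c_n (n : nat) (w : R) : R := sum_f_R0 (fun j => (INR j)^2 * w ^ j) n.

Definition F_n (n : nat) (w : R) : R :=
  / (2 * sqrt w) * sqrt (c_n n w / a_n n w)
  * sqrt ((a_n n w * c_n n w - (b_n n w)^2) / (w * (a_n n w)^2)).

(* Main.v *)
Require Import Defs.
From Stdlib Require Import Reals Lra Lia Psatz.
From Coquelicot Require Import Coquelicot.
Open Scope R_scope.

Lemma a_id n w : (w-1) * a_n n w = w^(S n) - 1.
Proof.
  induction n as [|n IH].
  - unfold a_n; simpl; ring.
  - unfold a_n in *; rewrite !tech5; cbv beta. rewrite Rmult_plus_distr_l, IH. simpl; ring.
Qed.

Lemma b_id n w : (w-1) * b_n n w = INR n * w^(S n) - (a_n n w - 1).
Proof.
  induction n as [|n IH].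
  - unfold a_n, b_n; simpl; ring.
  - unfold a_n, b_n in *; rewrite !tech5; cbv beta. rewrite Rmult_plus_distr_l, IH.
    rewrite S_INR. simpl pow. ring.
Qed.

Lemma c_id n w : (w-1) * c_n n w = (INR n)^2 * w^(S n) - 2 * b_n n w + (a_n n w - 1).
Proof.
  induction n as [|n IH].
  - unfold a_n, b_n, c_n; simpl; ring.
  - unfold a_n, b_n, c_n in *; rewrite !tech5; cbv beta. rewrite Rmult_plus_distr_l, IH.
    rewrite S_INR. simpl pow. ring.
Qed.

Lemma a_ge1 n w : 0 <= w -> 1 <= a_n n w.
Proof.
  intros Hw. induction n as [|n IH].
  - unfold a_n; simpl; lra.
  - unfold a_n in *; rewrite !tech5; cbv beta. pose proof (pow_le w (S n) Hw). lra.
Qed.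

Lemma c_le n w : 0 <= w -> c_n n w <= (INR n)^2 * a_n n w.
Proof.
  intros Hw. unfold c_n, a_n. rewrite scal_sum. apply sum_Rle.
  intros j Hj. rewrite (Rmult_comm (w^j)). apply Rmult_le_compat_r. apply pow_le; auto.
  apply pow_incr. split. apply pos_INR. apply le_INR; auto.
Qed.

Lemma key n w : 1 < w ->
  (w-1)^2 * (a_n n w * c_n n w - (b_n n w)^2) <= (w+1) * (a_n n w)^2.
Proof.
  intros Hw.
  set (A := a_n n w). set (B := b_n n w). set (C := c_n n w).
  set (N := INR n). set (X := w^(S n)).
  assert (HA : (w-1)*A = X - 1) by apply a_id.
  assert (HB : (w-1)*B = N*X - (A-1)) by apply b_id.
  assert (HC : (w-1)*C = N^2*X - 2*B + (A-1)) by apply c_id.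
  assert (A1 : 1 <= A) by (apply a_ge1; lra).
  assert (N0 : 0 <= N) by apply pos_INR.
  assert (D1 : (w-1)*(N*A - B) = A - 1 - N).
  { replace ((w-1)*(N*A-B)) with (N*((w-1)*A) - (w-1)*B) by ring.
    rewrite HA, HB; ring. }
  assert (D2 : (w-1)*(N^2*A - 2*N*B + C) = 2*(N*A-B) + A - (N+1)^2).
  { replace ((w-1)*(N^2*A - 2*N*B + C)) with
      (N^2*((w-1)*A) - 2*N*((w-1)*B) + (w-1)*C) by ring.
    rewrite HA, HB, HC; ring. }
  assert (E : A*C - B^2 = A*(N^2*A - 2*N*B + C) - (N*A-B)^2) by ring.
  assert (D2' : (w-1)^2*(N^2*A - 2*N*B + C) <= (w+1)*A).
  { replace ((w-1)^2*(N^2*A - 2*N*B + C)) with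
      ((w-1)*((w-1)*(N^2*A - 2*N*B + C))) by ring.
    rewrite D2.
    replace ((w-1)*(2*(N*A-B) + A - (N+1)^2)) with
       (2*((w-1)*(N*A-B)) + (w-1)*(A - (N+1)^2)) by ring.
    rewrite D1. assert (0 <= (w-1)*(N+1)^2) by (apply Rmult_le_pos; nra).
    nra. }
  rewrite E.
  replace ((w-1)^2*(A*(N^2*A - 2*N*B + C) - (N*A-B)^2)) with
    (A*((w-1)^2*(N^2*A - 2*N*B + C)) - ((w-1)*(N*A-B))^2) by ring.
  assert (0 <= ((w-1)*(N*A-B))^2) by apply pow2_ge_0.
  assert (A*((w-1)^2*(N^2*A - 2*N*B + C)) <= A*((w+1)*A)).
  { apply Rmult_le_compat_l; lra. }
  nra.
Qed.

Lemma F_bound n w : 1 < w -> F_n n w <= INR n / (w-1).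
Proof.
  intros Hw. unfold F_n.
  pose proof (key n w Hw) as K.
  set (A := a_n n w) in *. set (B := b_n n w) in *. set (C := c_n n w) in *.
  set (N := INR n).
  assert (A1 : 1 <= A) by (apply a_ge1; lra).
  assert (N0 : 0 <= N) by apply pos_INR.
  assert (CA : C <= N^2 * A) by (apply c_le; lra).
  assert (W0 : 0 < w - 1) by lra.
  assert (S1 : sqrt (C/A) <= N).
  { rewrite <- (sqrt_pow2 N N0). apply sqrt_le_1_alt.
    apply Rle_div_l; lra. }
  assert (S2 : sqrt ((A*C - B^2)/(w*A^2)) <= 2/(w-1)).
  { assert (P : 0 <= 2/(w-1)) by (apply Rlt_le, Rdiv_lt_0_compat; lra).
    rewrite <- (sqrt_pow2 _ P). apply sqrt_le_1_alt.
    apply Rle_div_l. nra.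
    assert (H4 : (A*C - B^2)*(w-1)^2 <= 4*w*A^2) by nra.
    replace ((2/(w-1))^2 * (w*A^2)) with (4*w*A^2 / (w-1)^2) by (field; lra).
    apply Rle_div_r. nra. lra. }
  assert (Sw : 1 <= sqrt w).
  { rewrite <- sqrt_1. apply sqrt_le_1_alt; lra. }
  assert (I1 : 0 <= / (2 * sqrt w)) by (apply Rlt_le, Rinv_0_lt_compat; lra).
  assert (I2 : / (2 * sqrt w) <= /2) by (apply Rinv_le_contravar; lra).
  apply Rle_trans with (/2 * N * (2/(w-1))).
  - apply Rmult_le_compat. apply Rmult_le_pos. auto. apply sqrt_pos.
    apply sqrt_pos. apply Rmult_le_compat; auto. apply sqrt_pos. auto.
  - right. field. lra.
Qed.

Lemma sum_der (f : nat -> R -> R) n x :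
  (forall j, ex_derive (f j) x) -> ex_derive (fun w => sum_f_R0 (fun j => f j w) n) x.
Proof.
  intros H. induction n as [|n IH].
  - simpl. apply H.
  - apply (ex_derive_ext (fun w => sum_f_R0 (fun j => f j w) n + f (S n) w)).
    + intros t. rewrite tech5. reflexivity.
    + apply (ex_derive_plus (fun w => sum_f_R0 (fun j => f j w) n) (f (S n))). apply IH. apply H.
Qed.

Lemma a_cont n x : continuous (a_n n) x.
Proof. apply (@ex_derive_continuous R_AbsRing R_NormedModule (a_n n) x). unfold a_n.
  apply (sum_der (fun j w => w^j)). intros j. auto_derive. auto. Qed.
Lemma b_cont n x : continuous (b_n n) x.
Proof. apply (@ex_derive_continuous R_AbsRing R_NormedModule (b_n n) x). unfold b_n.
  apply (sum_der (fun j w => INR j * w^j)). intros j. auto_derive. auto. Qed.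
Lemma c_cont n x : continuous (c_n n) x.
Proof. apply (@ex_derive_continuous R_AbsRing R_NormedModule (c_n n) x). unfold c_n.
  apply (sum_der (fun j w => INR j ^2 * w^j)). intros j. auto_derive. auto. Qed.

Lemma cmul (f g : R -> R) x : continuous f x -> continuous g x -> continuous (fun y => f y * g y) x.
Proof. intros; apply (continuous_mult f g x); auto. Qed.
Lemma cminus (f g : R -> R) x : continuous f x -> continuous g x -> continuous (fun y => f y - g y) x.
Proof. intros; apply (continuous_minus f g x); auto. Qed.
Lemma cconst (c x : R) : continuous (fun _ => c) x.
Proof. apply continuous_const. Qed.
Lemma cid (x : R) : continuous (fun y => y) x.
Proof. apply continuous_id. Qed.

Lemma F_cont n x : 1 < x -> continuous (F_n n) x.
Proof.
  intros Hx. unfold F_n.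
  assert (A1 : 1 <= a_n n x) by (apply a_ge1; lra).
  assert (Sx : 0 < sqrt x) by (apply sqrt_lt_R0; lra).
  pose proof (a_cont n x). pose proof (b_cont n x). pose proof (c_cont n x).
  apply cmul. apply cmul.
  - apply (continuous_Rinv_comp (fun y => 2 * sqrt y)).
    apply cmul. apply cconst. apply continuous_sqrt. lra.
  - apply (continuous_sqrt_comp (fun y => c_n n y / a_n n y)).
    apply cmul. auto. apply (continuous_Rinv_comp (a_n n)); auto. lra.
  - apply (continuous_sqrt_comp (fun y => (a_n n y * c_n n y - b_n n y ^ 2) / (y * a_n n y ^ 2))).
    apply cmul. apply cminus. apply cmul; auto.
    simpl. apply cmul. auto. apply cmul. auto. apply cconst.
    apply (continuous_Rinv_comp (fun y => y * a_n n y ^ 2)).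
    simpl. apply cmul. apply cid. apply cmul. auto. apply cmul. auto. apply cconst.
    simpl. apply Rgt_not_eq. nra.
Qed.

Theorem lemma3p5 : forall n : nat, (3 <= n)%nat ->
  RInt (F_n n) (1 + 1 / INR n) (1 + (ln (INR n))^2 / INR n)
  <= 2 * INR n * ln (ln (INR n)).
Proof.
  intros n Hn.
  assert (N3 : 3 <= INR n) by (replace 3 with (INR 3) by (simpl; ring); apply le_INR; auto).
  set (N := INR n) in *.
  assert (L1 : 1 <= ln N).
  { rewrite <- (ln_exp 1). apply ln_le. apply exp_pos. pose proof exp_le_3. lra. }
  set (L := ln N) in *.
  set (a := 1 + 1/N). set (b := 1 + L^2/N).
  assert (Ha : 1 < a) by (unfold a; assert (0 < 1/N) by (apply Rdiv_lt_0_compat; lra); lra).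
  assert (Hab : a <= b).
  { unfold a, b. apply Rplus_le_compat_l. unfold Rdiv. apply Rmult_le_compat_r.
    apply Rlt_le, Rinv_0_lt_compat; lra. nra. }
  assert (Hmin : Rmin a b = a) by (apply Rmin_left; auto).
  assert (Hmax : Rmax a b = b) by (apply Rmax_right; auto).
  assert (HI : is_RInt (fun w => N / (w-1)) a b (minus (N * ln (b-1)) (N * ln (a-1)))).
  { apply (is_RInt_derive (fun w => N * ln (w-1)) (fun w => N / (w-1))).
    - intros x Hx. rewrite Hmin, Hmax in Hx. auto_derive. lra. field. lra.
    - intros x Hx. rewrite Hmin, Hmax in Hx.
      apply (@ex_derive_continuous R_AbsRing R_NormedModule (fun w => N / (w-1)) x).
      auto_derive. lra. }
  apply Rle_trans with (RInt (fun w => N / (w-1)) a b).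
  - apply RInt_le; auto.
    + apply (@ex_RInt_continuous R_CompleteNormedModule). intros z Hz. rewrite Hmin, Hmax in Hz.
      apply F_cont. lra.
    + exists (minus (N * ln (b-1)) (N * ln (a-1))); exact HI.
    + intros x Hx. apply F_bound. lra.
  - rewrite (is_RInt_unique _ _ _ _ HI).
    unfold minus, plus, opp; simpl.
    replace (b-1) with (L^2/N) by (unfold b; ring).
    replace (a-1) with (1/N) by (unfold a; ring).
    rewrite !ln_div; try lra. rewrite ln_pow by lra. rewrite ln_1. simpl. right; ring.
    apply pow_lt; lra.
Qed.
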